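(* Let $\mathcal{H}_O\simeq\mathbb{C}^{d_O}$ and $\mathcal{H}_R\simeq\mathbb{C}^{d_R}$. Let $H_R=\sum_{m=1}^{d_R}\lambda_m^{\uparrow}|\xi_m\rangle\langle\xi_m|$ with $\lambda_1^\uparrow\leqslant\dots\leqslant\lambda_{d_R}^\uparrow$ and $\{|\xi_m\rangle\}$ an orthonormal basis of $\mathcal{H}_R$; let $\beta\in(0,\infty)$ and $\rho_R(\beta)=e^{-\beta H_R}/\mathrm{tr}[e^{-\beta H_R}]=\sum_m r_m^{\downarrow}|\xi_m\rangle\langle\xi_m|$. Let $\rho_O=\sum_{l=1}^{d_O}o_l^{\downarrow}|\varphi_l\rangle\langle\varphi_l|$ be a density operator on $\mathcal{H}_O$ with $o_1^\downarrow\geqslant\dots\geqslant o_{d_O}^\downarrow$ and $\{|\varphi_l\rangle\}$ an orthonormal basis. Write $\rho=\rho_O\otimes\rho_R(\beta)=\sum_{n=1}^{d_Od_R}p_n^{\downarrow}|\psi_n\rangle\langle\psi_n|$, where $(p_n^\downarrow)_n$ is the non-increasing rearrangement of $(o_l^\downarrow r_m^\downarrow)_{l,m}$ and $(|\psi_n\rangle)_n$ the correspondingly rearranged family $(|\varphi_l\rangle\otimes|\xi_m\rangle)_{l,m}$. For a unitary $U$ on $\mathcal{H}_O\otimes\mathcal{H}_R$, let $\rho'=U\rho U^\dagger$, $p(\varphi_1|\rho_O')=\langle\varphi_1|\mathrm{tr}_R[\rho']|\varphi_1\rangle$, and $\Delta Q(U)=\mathrm{tr}[H_R(\mathrm{tr}_O[\rho']-\rho_R(\beta))]$;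 let $p_{\varphi_1}^{\max}=\sum_{m=1}^{d_R}p_m^\downarrow$ (the maximum of $p(\varphi_1|\rho_O')$ over all unitaries). Suppose $U_{\mathrm{opt}}(0)$ is a unitary such that (i) $U_{\mathrm{opt}}(0)|\psi_m\rangle=|\varphi_1\rangle\otimes|\xi_m\rangle$ for all $m\in\{1,\dots,d_R\}$, and (ii) for each $m\in\{1,\dots,d_R\}$ there is an orthonormal family $\{|\varphi_l^m\rangle\}_{l=1}^{d_O-1}$ in $\mathcal{H}_O$, each member orthogonal to $|\varphi_1\rangle$, with $U_{\mathrm{opt}}(0)|\psi_{d_R+(m-1)(d_O-1)+l}\rangle=|\varphi_l^m\rangle\otimes|\xi_m\rangle$ for all $l\in\{1,\dots,d_O-1\}$. Then $U_{\mathrm{opt}}(0)$ attains $p(\varphi_1|\rho_O')=p_{\varphi_1}^{\max}$, and $\Delta Q(U_{\mathrm{opt}}(0))\leqslant\Delta Q(V)$ for every unitary $V$ on $\mathcal{H}_O\otimes\mathcal{H}_R$ that also attains $p(\varphi_1|\mathrm{tr}_R[V\rho V^\dagger])=p_{\varphi_1}^{\max}$.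
   Context: $\mathrm{tr}_O,\mathrm{tr}_R$ denote partial traces over $\mathcal{H}_O$ and $\mathcal{H}_R$. In the paper the rules (i),(ii) are phrased by partitioning $(p_n^\downarrow)$ into the block $\Pi_0=(p_1^\downarrow,\dots,p_{d_R}^\downarrow)$ and blocks $\Pi_m=(p^\downarrow_{d_R+(m-1)(d_O-1)+l})_{l=1}^{d_O-1}$, $m\geqslant1$. *)

(* Defs.v *)
From HB Require Import structures.
From mathcomp Require Import all_boot all_order all_algebra.
From mathcomp Require Import complex.
From mathcomp Require Import reals.
From mathcomp.analysis Require Import sequences exp.

Set Implicit Arguments.
Unset Strict Implicit.
Unset Printing Implicit Defensive.

Import Order.TTheory GRing.Theory Num.Theory.
Local Open Scope ring_scope.
Local Open Scope sesquilinear_scope.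
Local Open Scope complex_scope.

(* Conventions: complex scalars are [R[i]] for [R : realType]; kets are column
   vectors ['cV[R[i]]_d]; the composite space H_O (x) H_R of dimension dO*dR is
   indexed by [mxvec_index i j] (i : 'I_dO the H_O index, j : 'I_dR the H_R index). *)

Section QDefs.
Variable R : realType.
Local Notation C := R[i].

Definition tensv (m n : nat) (u : 'cV[C]_m) (v : 'cV[C]_n) : 'cV[C]_(m * n) :=
  (mxvec (u *m v^T))^T.

Definition ketbra (n : nat) (u : 'cV[C]_n) : 'M[C]_n := u *m u ^t*.

Definition expect (n : nat) (u : 'cV[C]_n) (A : 'M[C]_n) : C :=
  (u ^t* *m A *m u) 0 0.

Definition onfam (n k : nat) (u : 'I_k -> 'cV[C]_n) : Prop :=
  forall i j : 'I_k, (u i) ^t* *m (u j) = ((i == j)%:R : C)%:M.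

Definition ptrR (dO dR : nat) (A : 'M[C]_(dO * dR)) : 'M[C]_dO :=
  \matrix_(i, k) \sum_(j < dR) A (mxvec_index i j) (mxvec_index k j).

Definition ptrO (dO dR : nat) (A : 'M[C]_(dO * dR)) : 'M[C]_dR :=
  \matrix_(j, l) \sum_(i < dO) A (mxvec_index i j) (mxvec_index i l).

Arguments ptrR dO dR A : clear implicits.
Arguments ptrO dO dR A : clear implicits.

Definition specop (n k : nat) (a : 'I_k -> R) (u : 'I_k -> 'cV[C]_n) : 'M[C]_n :=
  \sum_(m < k) (a m)%:C *: ketbra (u m).

Definition gibbs_weight (dR : nat) (beta : R) (lam : 'I_dR -> R) (m : 'I_dR) : R :=
  expR (- (beta * lam m)) / \sum_(k < dR) expR (- (beta * lam k)).

Definition pop (dO dR : nat) (phi : 'cV[C]_dO) (rho U : 'M[C]_(dO * dR)) : C :=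
  expect phi (ptrR dO dR (U *m rho *m U ^t*)).

Definition heat (dO dR : nat) (HR rhoR : 'M[C]_dR) (rho U : 'M[C]_(dO * dR)) : C :=
  \tr (HR *m (ptrO dO dR (U *m rho *m U ^t*) - rhoR)).

Definition kron (m n : nat) (A : 'M[C]_m) (B : 'M[C]_n) : 'M[C]_(m * n) :=
  \matrix_(k, k') \sum_(i < m) \sum_(j < n) \sum_(i' < m) \sum_(j' < n)
     (((k == mxvec_index i j) && (k' == mxvec_index i' j'))%:R * (A i i' * B j j')).

Definition rear_ket (dO dR : nat) (phi : 'I_dO -> 'cV[C]_dO) (xi : 'I_dR -> 'cV[C]_dR)
  (sigma : 'I_(dO * dR) -> 'I_dO * 'I_dR) (n : 'I_(dO * dR)) : 'cV[C]_(dO * dR) :=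
  tensv (phi (sigma n).1) (xi (sigma n).2).

Definition rear_weight (dO dR : nat) (o : 'I_dO -> R) (r : 'I_dR -> R)
  (sigma : 'I_(dO * dR) -> 'I_dO * 'I_dR) (n : 'I_(dO * dR)) : R :=
  o (sigma n).1 * r (sigma n).2.

End QDefs.

Arguments pop {R} dO dR phi rho U.
Arguments heat {R} dO dR HR rhoR rho U.

(* Main.v *)
Require Import Defs.
From HB Require Import structures.
From mathcomp Require Import all_boot all_order all_algebra.
From mathcomp Require Import complex.
From mathcomp Require Import reals.
From mathcomp.analysis Require Import sequences exp.
From mathcomp Require Import ring lra zify.
Import Order.TTheory GRing.Theory Num.Theory.
Local Open Scope ring_scope.
Local Open Scope sesquilinear_scope.
Local Open Scope complex_scope.
Section Q.
Variable R : realType.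
Local Notation C := R[i].

Definition sqn (z : C) : R := complex.Re z ^+ 2 + complex.Im z ^+ 2.
Lemma sqnE (z : C) : z * z^* = (sqn z)%:C.
Proof. case: z => a b; rewrite /sqn /=; apply/eqP; rewrite eq_complex /=; apply/andP; split; apply/eqP; ring. Qed.
Lemma sqnE' (z : C) : z^* * z = (sqn z)%:C.
Proof. by rewrite mulrC sqnE. Qed.
Lemma sqn_ge0 z : 0 <= sqn z.
Proof. by rewrite /sqn addr_ge0 // sqr_ge0. Qed.
Lemma sqnM x y : sqn (x * y) = sqn x * sqn y.
Proof. apply: complexI; rewrite [RHS]rmorphM /= -!sqnE rmorphM /=; ring. Qed.
Lemma sqnJ z : sqn z^* = sqn z.
Proof. by case: z => a b; rewrite /sqn /= sqrrN. Qed.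
Lemma sqn1 : sqn 1 = 1.
Proof. by rewrite /sqn /= expr1n expr0n addr0. Qed.
Lemma sqn0 : sqn 0 = 0.
Proof. by rewrite /sqn /= expr0n addr0. Qed.

Lemma ipE n (u v : 'cV[C]_n) : (u ^t* *m v) 0 0 = \sum_k (u k 0)^* * v k 0.
Proof. by rewrite mxE; apply: eq_bigr => k _; rewrite !mxE. Qed.

Lemma sum_pair m n (F : 'I_(m*n) -> C) :
  \sum_k F k = \sum_i \sum_j F (mxvec_index i j).
Proof.
rewrite pair_big /= (reindex _ (curry_mxvec_bij m n)) /=.
by apply: eq_bigr => -[i j].
Qed.

Lemma sum_pairR m n (F : 'I_(m*n) -> R) :
  \sum_k F k = \sum_i \sum_j F (mxvec_index i j).
Proof.
rewrite pair_big /= (reindex _ (curry_mxvec_bij m n)) /=.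
by apply: eq_bigr => -[i j].
Qed.

Lemma mxvec_index_inj m n (i i' : 'I_m) (j j' : 'I_n) :
  (mxvec_index i j == mxvec_index i' j') = (i == i') && (j == j').
Proof.
case: (curry_mxvec_bij m n) => g hg _.
apply/eqP/andP => [h|[/eqP -> /eqP ->]] //.
have := hg (i, j) isT; have := hg (i', j') isT; rewrite /= h => -> [-> ->].
by split.
Qed.

Lemma mxvec_index_surj m n (k : 'I_(m*n)) : exists i j, k = mxvec_index i j.
Proof.
case: (curry_mxvec_bij m n) => g _ hg.
have := hg k isT; case: (g k) => i j /= <-; by exists i, j.
Qed.

Lemma tensvE m n (u : 'cV[C]_m) (v : 'cV[C]_n) i j :
  tensv u v (mxvec_index i j) 0 = u i 0 * v j 0.
Proof. by rewrite /tensv mxE mxvecE mxE big_ord1 !mxE. Qed.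

Lemma ip_tens m n (a u : 'cV[C]_m) (b v : 'cV[C]_n) :
  (tensv a b ^t* *m tensv u v) 0 0 = (a ^t* *m u) 0 0 * (b ^t* *m v) 0 0.
Proof.
rewrite !ipE sum_pair mulr_suml; apply: eq_bigr => i _.
rewrite mulr_sumr; apply: eq_bigr => j _.
rewrite !tensvE rmorphM /=; ring.
Qed.

Lemma sum_delta (T : finType) (i : T) (F : T -> C) :
  \sum_a ((i == a)%:R * F a) = F i.
Proof.
rewrite (bigD1 i) //= eqxx mul1r big1 ?addr0 // => a /negbTE.
by rewrite eq_sym => ->; rewrite mul0r.
Qed.

Lemma exch (I J : finType) (F : I -> J -> C) :
  \sum_i \sum_j F i j = \sum_j \sum_i F i j.
Proof. exact: exchange_big. Qed.

Lemma complete n (u : 'I_n -> 'cV[C]_n) : onfam u ->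
  forall k l, \sum_i u i k 0 * (u i l 0)^* = (k == l)%:R.
Proof.
move=> hu.
pose M : 'M[C]_n := \matrix_(k, i) u i k 0.
have h1 : M ^t* *m M = 1%:M.
  apply/matrixP => i j; have := hu i j; move/matrixP/(_ 0 0).
  rewrite ipE [RHS]mxE eqxx mulr1n => h.
  rewrite [RHS]mxE -h mxE; apply: eq_bigr => k _; by rewrite !mxE.
have /matrixP h2 := mulmx1C h1.
move=> k l; have := h2 k l; rewrite !mxE => <-.
by apply: eq_bigr => i _; rewrite !mxE.
Qed.

Lemma onfamE n k (u : 'I_k -> 'cV[C]_n) : onfam u ->
  forall i j, (u i ^t* *m u j) 0 0 = (i == j)%:R.
Proof. by move=> hu i j; rewrite hu mxE eqxx mulr1n. Qed.

Lemma parseval (T : finType) n (f : T -> 'cV[C]_n)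
  (hf : forall k l, \sum_t f t k 0 * (f t l 0)^* = (k == l)%:R) (w : 'cV[C]_n) :
  \sum_t (sqn ((f t ^t* *m w) 0 0))%:C = (w ^t* *m w) 0 0.
Proof.
transitivity (\sum_t \sum_l \sum_k ((w l 0)^* * w k 0) * (f t l 0 * (f t k 0)^*)).
  apply: eq_bigr => t _; rewrite -sqnE' ipE rmorph_sum mulr_suml.
  apply: eq_bigr => l _; rewrite mulr_sumr; apply: eq_bigr => k _.
  rewrite rmorphM /= conjCK; ring.
rewrite exchange_big ipE; apply: eq_bigr => l _; rewrite exch.
transitivity (\sum_k ((l == k)%:R * ((w l 0)^* * w k 0))).
  apply: eq_bigr => k _; by rewrite -mulr_sumr hf mulrC.
by rewrite sum_delta.
Qed.

Lemma sum_pairT (I J : finType) (F : I * J -> C) :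
  \sum_p F p = \sum_i \sum_j F (i, j).
Proof. by rewrite pair_big; apply: eq_bigr => -[]. Qed.

Lemma complete_tens m n (u : 'I_m -> 'cV[C]_m) (v : 'I_n -> 'cV[C]_n) :
  onfam u -> onfam v ->
  forall k l, \sum_(p : 'I_m * 'I_n) tensv (u p.1) (v p.2) k 0 * (tensv (u p.1) (v p.2) l 0)^*
     = (k == l)%:R.
Proof.
move=> hu hv k l.
have [a [b hk]] := @mxvec_index_surj m n k; have [a' [b' hl]] := @mxvec_index_surj m n l; subst k l.
rewrite sum_pairT /=.
transitivity ((\sum_i u i a 0 * (u i a' 0)^*) * (\sum_j v j b 0 * (v j b' 0)^*)).
  rewrite mulr_suml; apply: eq_bigr => i _; rewrite mulr_sumr; apply: eq_bigr => j _.
  rewrite !tensvE rmorphM /=; ring.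
rewrite !complete // mxvec_index_inj.
by case: (a == a'); case: (b == b'); rewrite ?mul0r ?mul1r.
Qed.

Lemma expectE n (u : 'cV[C]_n) (A : 'M[C]_n) :
  expect u A = \sum_a \sum_b (u a 0)^* * A a b * u b 0.
Proof.
rewrite /expect mxE exch; apply: eq_bigr => a _.
rewrite mxE mulr_suml; apply: eq_bigr => b _; by rewrite !mxE.
Qed.

Lemma expect_ptrR dO dR (phi0 : 'cV[C]_dO) (xi : 'I_dR -> 'cV[C]_dR) :
  onfam xi -> forall X : 'M[C]_(dO * dR),
  expect phi0 (@ptrR R dO dR X) = \sum_m expect (tensv phi0 (xi m)) X.
Proof.
move=> hxi X.
have hc := @complete _ _ hxi.
transitivity (\sum_i \sum_k \sum_j (phi0 i 0)^* * X (mxvec_index i j) (mxvec_index k j) * phi0 k 0).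
  rewrite expectE; apply: eq_bigr => i _; apply: eq_bigr => k _.
  by rewrite mxE mulr_sumr mulr_suml.
under [RHS]eq_bigr do rewrite expectE.
rewrite [RHS]exch; under [RHS]eq_bigr do rewrite exch.
rewrite [RHS]sum_pair; apply: eq_bigr => i _.
under [RHS]eq_bigr do rewrite sum_pair.
rewrite [RHS]exch; apply: eq_bigr => k _; apply: eq_bigr => j _.
transitivity (\sum_l ((j == l)%:R * ((phi0 i 0)^* * X (mxvec_index i j) (mxvec_index k l) * phi0 k 0))).
  by rewrite sum_delta.
apply: eq_bigr => l _.
rewrite eq_sym -hc mulr_suml; apply: eq_bigr => m _.
rewrite !tensvE rmorphM /=. ring.
Qed.

Lemma expect_ptrO dO dR (phi : 'I_dO -> 'cV[C]_dO) (v : 'cV[C]_dR) :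
  onfam phi -> forall X : 'M[C]_(dO * dR),
  expect v (@ptrO R dO dR X) = \sum_i expect (tensv (phi i) v) X.
Proof.
move=> hphi X.
have hc := @complete _ _ hphi.
transitivity (\sum_j \sum_l \sum_a (v j 0)^* * X (mxvec_index a j) (mxvec_index a l) * v l 0).
  rewrite expectE; apply: eq_bigr => j _; apply: eq_bigr => l _.
  by rewrite mxE mulr_sumr mulr_suml.
under [RHS]eq_bigr do rewrite expectE.
rewrite [RHS]exch; under [RHS]eq_bigr do rewrite exch.
rewrite [RHS]sum_pair [RHS]exch; apply: eq_bigr => j _.
under [RHS]eq_bigr do rewrite sum_pair.
under [RHS]eq_bigr do rewrite exch.
rewrite [RHS]exch; apply: eq_bigr => l _.
apply: eq_bigr => a _.
transitivity (\sum_k ((a == k)%:R * ((v j 0)^* * X (mxvec_index a j) (mxvec_index k l) * v l 0))).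
  by rewrite sum_delta.
apply: eq_bigr => k _.
rewrite eq_sym -hc mulr_suml; apply: eq_bigr => i _.
rewrite !tensvE rmorphM /=; ring.
Qed.

Lemma tr_specop n k (a : 'I_k -> R) (u : 'I_k -> 'cV[C]_n) (Y : 'M[C]_n) :
  \tr (specop a u *m Y) = \sum_m (a m)%:C * expect (u m) Y.
Proof.
rewrite /mxtrace /specop.
under eq_bigr do rewrite mxE.
rewrite [LHS]exch.
under [RHS]eq_bigr do rewrite expectE mulr_sumr.
rewrite [RHS]exch; apply: eq_bigr => c _.
under [LHS]eq_bigr do rewrite summxE mulr_suml.
rewrite [LHS]exch; apply: eq_bigr => m _.
rewrite mulr_sumr; apply: eq_bigr => b _.
rewrite !mxE big_ord1 !mxE; ring.
Qed.

Lemma expect_ketbra n (e w : 'cV[C]_n) :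
  expect e (ketbra w) = (sqn ((e ^t* *m w) 0 0))%:C.
Proof.
rewrite -sqnE /expect /ketbra.
have -> : e ^t* *m (w *m w ^t*) *m e = (e ^t* *m w) *m (w ^t* *m e) by rewrite !mulmxA.
rewrite mxE big_ord1.
congr (_ * _); rewrite !ipE rmorph_sum /=; apply: eq_bigr => k _.
by rewrite rmorphM /= conjCK mulrC.
Qed.

Lemma expect_sum n (T : finType) (e : 'cV[C]_n) (c : T -> C) (A : T -> 'M[C]_n) :
  expect e (\sum_t c t *: A t) = \sum_t c t * expect e (A t).
Proof.
rewrite /expect mulmx_sumr mulmx_suml summxE; apply: eq_bigr => t _.
by rewrite -scalemxAr -scalemxAl mxE.
Qed.

Lemma conj_spec n (T : finType) (V : 'M[C]_n) (c : T -> C) (u : T -> 'cV[C]_n) :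
  V *m (\sum_t c t *: ketbra (u t)) *m V ^t* = \sum_t c t *: ketbra (V *m u t).
Proof.
rewrite mulmx_sumr mulmx_suml; apply: eq_bigr => t _.
rewrite -scalemxAr -scalemxAl /ketbra trmx_mul map_mxM !mulmxA.
by [].
Qed.

Lemma kronE m n (A : 'M[C]_m) (B : 'M[C]_n) i j i' j' :
  kron A B (mxvec_index i j) (mxvec_index i' j') = A i i' * B j j'.
Proof.
rewrite mxE.
transitivity (\sum_a ((i == a)%:R * \sum_b ((j == b)%:R * \sum_a' ((i' == a')%:R *
   \sum_b' ((j' == b')%:R * (A a a' * B b b')))))).
  apply: eq_bigr => a _; rewrite !mulr_sumr; apply: eq_bigr => b _.
  rewrite !mulr_sumr; apply: eq_bigr => a' _; rewrite !mulr_sumr; apply: eq_bigr => b' _.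
  rewrite !mxvec_index_inj.
  by case: (i == a); case: (j == b); case: (i' == a'); case: (j' == b'); rewrite /= ?mul0r ?mul1r.
by rewrite !sum_delta.
Qed.

Lemma specopE n k (c : 'I_k -> R) (u : 'I_k -> 'cV[C]_n) i i' :
  specop c u i i' = \sum_m (c m)%:C * (u m i 0 * (u m i' 0)^*).
Proof. rewrite /specop summxE; apply: eq_bigr => m _; by rewrite !mxE big_ord1 !mxE. Qed.

Lemma ip_conj n (u v : 'cV[C]_n) :
  (u ^t* *m v) 0 0 = ((v ^t* *m u) 0 0)^*.
Proof.
rewrite !ipE rmorph_sum; apply: eq_bigr => k _.
by rewrite rmorphM /= ?conjcK ?conjCK mulrC.
Qed.

End Q.
Arguments sqn {R}.

Section Cl.
Variable R : realType.

Lemma sum_ind_count N (a : nat) : (a <= N)%N ->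
  \sum_(n < N) ((n < a)%N%:R : R) = a%:R.
Proof.
move=> ha.
transitivity (\sum_(n < N | (n < a)%N) (1 : R)).
  by rewrite [RHS]big_mkcond; apply: eq_bigr => n _; case: ltnP.
rewrite -(big_ord_widen N (fun _ => (1 : R)) ha).
by rewrite sumr_const card_ord.
Qed.

Lemma sum_if N (P : pred 'I_N) (F : 'I_N -> R) :
  \sum_(n < N | P n) F n = \sum_n (if P n then F n else 0).
Proof. exact: big_mkcond. Qed.

Lemma knap N (p g c : 'I_N -> R) (lo K : nat) (s : R) :
  (lo + K <= N)%N ->
  (forall n : 'I_N, (n < lo + K)%N -> s <= p n) ->
  (forall n : 'I_N, (lo + K <= n)%N -> p n <= s) ->
  (forall n, 0 <= g n) -> (forall n, 0 <= c n) -> (forall n, g n + c n <= 1) ->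
  \sum_n g n = K%:R -> \sum_n c n = lo%:R ->
  \sum_n p n * c n = \sum_(n < N | (n < lo)%N) p n ->
  \sum_n p n * g n <= \sum_(n < N | (lo <= n < lo + K)%N) p n.
Proof.
move=> hN hs1 hs2 hg hc hgc sg sc spc.
pose chi := fun n : 'I_N => ((n < lo + K)%N%:R : R).
have h1 : \sum_n (p n - s) * (g n + c n - chi n) <= 0.
  apply: sumr_le0 => n _; rewrite /chi; case: ltnP => h /=.
    apply: mulr_ge0_le0; first by rewrite subr_ge0 hs1.
    by rewrite subr_le0 hgc.
  apply: mulr_le0_ge0; first by rewrite subr_le0 hs2.
  by rewrite subr0 addr_ge0.
have e1 : \sum_n (p n - s) * (g n + c n - chi n) =
   \sum_n p n * g n + \sum_n p n * c n - \sum_n p n * chi n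
   - (s * \sum_n g n + s * \sum_n c n - s * \sum_n chi n).
  transitivity (\sum_n (p n * g n + p n * c n - p n * chi n - (s * g n + s * c n - s * chi n))).
    by apply: eq_bigr => n _; ring.
  by rewrite !sumrB !big_split /= !mulr_sumr.
have e2 : \sum_n chi n = (lo + K)%:R by rewrite sum_ind_count.
have e3 : \sum_n p n * chi n = \sum_(n < N | (n < lo)%N) p n + \sum_(n < N | (lo <= n < lo + K)%N) p n.
  rewrite !sum_if; transitivity (\sum_(n < N) ((if (n < lo)%N then p n else 0) + (if (lo <= n < lo + K)%N then p n else 0))); last by rewrite big_split.
  apply: eq_bigr => n _; rewrite /chi.
  case: (ltnP n lo) => hh1; case: (ltnP n (lo + K)) => hh2 /=;
    rewrite ?mulr1 ?mulr0 ?addr0 ?add0r //.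
  have := leq_ltn_trans hh2 hh1; by rewrite ltnNge leq_addr.
rewrite sg sc e2 e3 natrD in e1.
have e4 : s * K%:R + s * lo%:R - s * (lo%:R + K%:R) = 0 by ring.
rewrite e4 subr0 in e1.
lra.
Qed.

Lemma abel_nat (L Z : nat -> R) n :
  (forall j, (j.+1 < n)%N -> L j <= L j.+1) ->
  (forall t, (t <= n)%N -> \sum_(j < t) Z j <= 0) ->
  L n.-1 * \sum_(j < n) Z j <= \sum_(j < n) L j * Z j.
Proof.
elim: n => [|n IH] hL hZ; first by rewrite !big_ord0 mulr0.
rewrite !big_ord_recr /=.
have IH' := IH (fun j hj => hL j (ltnW hj)) (fun t ht => hZ t (leqW ht)).
have hS := hZ n (leqnSn n).
case: n IH IH' hL hZ hS => [|n] IH IH' hL hZ hS.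
  by rewrite !big_ord0 !add0r.
have hl : L n <= L n.+1 by apply: hL.
have : (L n.+1 - L n) * \sum_(j < n.+1) Z j <= 0.
  by apply: mulr_ge0_le0; rewrite ?subr_ge0.
simpl in IH'.
nra.
Qed.

Lemma abel d (lam z : 'I_d -> R) :
  (forall m m' : 'I_d, (m <= m')%N -> lam m <= lam m') ->
  (forall t, (t <= d)%N -> \sum_(m < d | (m < t)%N) z m <= 0) ->
  \sum_m z m = 0 -> 0 <= \sum_m lam m * z m.
Proof.
case: d lam z => [|d] lam z hl hz h0; first by rewrite big_ord0.
pose L := fun j : nat => lam (inord j).
pose Z := fun j : nat => z (inord j).
have eLZ : \sum_(m < d.+1) lam m * z m = \sum_(j < d.+1) L j * Z j.
  by apply: eq_bigr => m _; rewrite /L /Z inord_val.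
have eZ : forall t, (t <= d.+1)%N -> \sum_(j < t) Z j = \sum_(m < d.+1 | (m < t)%N) z m.
  move=> t ht; rewrite (big_ord_widen d.+1 Z ht).
  by apply: eq_bigr => m _; rewrite /Z inord_val.
have := @abel_nat L Z d.+1.
rewrite -eLZ (eZ _ (leqnn _)).
have -> : \sum_(m < d.+1 | (m < d.+1)%N) z m = \sum_m z m.
  by apply: eq_bigl => m; rewrite ltn_ord.
rewrite h0 mulr0; apply.
  move=> j hj; rewrite /L; apply: hl; rewrite !inordK //; exact: ltnW.
by move=> t ht; rewrite eZ // hz.
Qed.
Lemma exchR (I J : finType) (P : pred I) (Q : pred J) (F : I -> J -> R) :
  \sum_(i | P i) \sum_(j | Q j) F i j = \sum_(j | Q j) \sum_(i | P i) F i j.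
Proof. exact: exchange_big. Qed.

Lemma sum_le_full (I : finType) (P : pred I) (F : I -> R) :
  (forall i, 0 <= F i) -> \sum_(i | P i) F i <= \sum_i F i.
Proof.
move=> hF; rewrite [X in X <= _]big_mkcond /=; apply: ler_sum => i _.
by case: (P i) => //; apply: hF.
Qed.

Lemma count_ord d t : (t <= d)%N -> \sum_(m < d | (m < t)%N) (1 : R) = t%:R.
Proof.
move=> ht; rewrite -(big_ord_widen d (fun _ => (1 : R)) ht).
by rewrite sumr_const card_ord.
Qed.

Lemma count_neq d (i0 : 'I_d) : \sum_(i < d | i != i0) (1 : R) = d.-1%:R.
Proof.
have e : \sum_(i < d) (1 : R) = d%:R by rewrite sumr_const card_ord.
rewrite (bigD1 i0) //= in e.
have hd : (0 < d)%N := leq_ltn_trans (leq0n _) (ltn_ord i0).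
move: e; rewrite -[X in X%:R](prednK hd) -natr1 => h.
by apply: (addrI 1); rewrite h addrC.
Qed.

Lemma arith1 d t dR : (t <= dR)%N -> (dR + t * d <= d.+1 * dR)%N.
Proof. move=> h; nia. Qed.

Lemma blk_aux d dR n : (n < d.+1 * dR)%N -> (dR <= n)%N ->
  (0 < d)%N /\ ((n - dR) %/ d < dR)%N.
Proof.
move=> h1 h2.
have hd : (0 < d)%N by case: d h1 => [|d] h1 //; lia.
split => //; rewrite ltn_divLR //; nia.
Qed.

Lemma blk_div d dR n t : (0 < d)%N -> (dR <= n)%N ->
  ((n - dR) %/ d < t)%N = (n < dR + t * d)%N.
Proof. move=> hd h; rewrite ltn_divLR //; apply/idP/idP; lia. Qed.

Lemma master dO dR (i0 : 'I_dO) (lam : 'I_dR -> R)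
  (hlam : forall m m' : 'I_dR, (m <= m')%N -> lam m <= lam m')
  (p : 'I_(dO * dR) -> R)
  (hp : forall n n' : 'I_(dO * dR), (n <= n')%N -> p n' <= p n)
  (a : 'I_(dO * dR) -> 'I_dO -> 'I_dR -> R)
  (ha0 : forall n i m, 0 <= a n i m)
  (hrow : forall n, \sum_i \sum_m a n i m = 1)
  (hcol : forall i m, \sum_n a n i m = 1)
  (hpop : \sum_m \sum_n p n * a n i0 m = \sum_(n < dO * dR | (n < dR)%N) p n)
  (blk : 'I_(dO * dR) -> 'I_dR)
  (hblk : forall (n : 'I_(dO * dR)) t, (t <= dR)%N ->
      (blk n < t)%N = (n < t)%N || (dR <= n < dR + t * dO.-1)%N) :
  \sum_m lam m * \sum_n p n * (blk n == m)%:R <=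
  \sum_m lam m * \sum_i \sum_n p n * a n i m.
Proof.
have hO : (0 < dO)%N := leq_ltn_trans (leq0n _) (ltn_ord i0).
pose y := fun m => \sum_i \sum_n p n * a n i m.
pose y0 := fun m : 'I_dR => \sum_n p n * (blk n == m)%:R.
pose c := fun n => \sum_m a n i0 m.
have hy : forall m, y m = \sum_n p n * (a n i0 m + \sum_(i | i != i0) a n i m).
  move=> m; rewrite /y exchR; apply: eq_bigr => n _.
  by rewrite -mulr_sumr [in LHS](bigD1 i0).
have hrow' : forall n, \sum_m (a n i0 m + \sum_(i | i != i0) a n i m) = 1.
  move=> n; rewrite -(hrow n) [RHS]exchR; apply: eq_bigr => m _.
  by rewrite [RHS](bigD1 i0).
rewrite -subr_ge0 -sumrB.
under eq_bigr do rewrite -mulrBr.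
apply: abel => //.
- case=> [|t] ht.
    by rewrite big_pred0 // => m; rewrite ltn0.
  rewrite sumrB subr_le0.
  rewrite -/(\sum_(m < dR | (m < t.+1)%N) y m).
  pose f := fun n => \sum_(m < dR | (m < t.+1)%N) a n i0 m.
  pose g := fun n => \sum_(m < dR | (m < t.+1)%N) \sum_(i | i != i0) a n i m.
  have eY : \sum_(m < dR | (m < t.+1)%N) y m = \sum_n p n * f n + \sum_n p n * g n.
    under eq_bigr do rewrite hy.
    transitivity (\sum_n (p n * f n + p n * g n)); last by rewrite big_split.
    rewrite exchR; apply: eq_bigr => n _.
    by rewrite -mulr_sumr big_split /= mulrDr.
  have eY0 : \sum_(m < dR | (m < t.+1)%N) y0 m =
      \sum_(n < dO * dR | (0 <= n < 0 + t.+1)%N) p n +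
      \sum_(n < dO * dR | (dR <= n < dR + t.+1 * dO.-1)%N) p n.
    rewrite /y0 exchR.
    transitivity (\sum_n p n * ((blk n < t.+1)%N)%:R).
      apply: eq_bigr => n _; rewrite -mulr_sumr; congr (_ * _).
      case: (ltnP (blk n) t.+1) => hb.
        rewrite (bigD1 (blk n)) //= eqxx big1 ?addr0 // => m /andP [_ /negbTE].
        by rewrite eq_sym => ->.
      rewrite big1 // => m hm; rewrite (_ : (blk n == m) = false) //.
      apply/negbTE; apply/eqP => e; move: hm; by rewrite -e ltnNge hb.
    rewrite !sum_if.
    transitivity (\sum_(n < dO * dR) ((if (0 <= n < 0 + t.+1)%N then p n else 0) +
      (if (dR <= n < dR + t.+1 * dO.-1)%N then p n else 0))); last by rewrite big_split.
    apply: eq_bigr => n _; rewrite hblk // leq0n add0n /=.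
    case: (ltnP n t.+1) => hA /=.
      have -> : (dR <= n)%N = false by apply/negbTE; rewrite -ltnNge (leq_trans hA ht).
      by rewrite mulr1 addr0.
    by case: (_ && _); rewrite ?mulr1 ?mulr0 ?add0r.
  have hN1 : (dR <= dO * dR)%N by rewrite leq_pmull.
  have hc1 : forall n, c n <= 1.
    move=> n; rewrite -(hrow n) [in X in _ <= X](bigD1 i0) //= lerDl.
    by apply: sumr_ge0 => i _; apply: sumr_ge0.
  have hf1 : forall n, f n <= c n by move=> n; apply: sum_le_full.
  have k1 : \sum_n p n * f n <= \sum_(n < dO * dR | (0 <= n < 0 + t.+1)%N) p n.
    have ht' : (t < dO * dR)%N by apply: leq_trans hN1.
    apply: (@knap _ p f (fun _ => 0) 0 t.+1 (p (Ordinal ht'))).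
    - by rewrite add0n.
    - by move=> n; rewrite add0n ltnS => hn; apply: hp.
    - by move=> n; rewrite add0n => hn; apply: hp; apply: ltnW.
    - by move=> n; apply: sumr_ge0.
    - by [].
    - by move=> n; rewrite addr0; apply: le_trans (hf1 n) (hc1 n).
    - rewrite /f exchR -(@count_ord dR t.+1 ht).
      by apply: eq_bigr => m _; rewrite hcol.
    - by rewrite big1.
    - rewrite big1; last by move=> n _; rewrite mulr0.
      by rewrite big_pred0 // => n; rewrite ltn0.
  have hK : (dR + t.+1 * dO.-1 <= dO * dR)%N.
    by have := @arith1 dO.-1 t.+1 dR ht; rewrite prednK.
  have hK0 : (0 < dR + t.+1 * dO.-1)%N by lia.
  have hK' : ((dR + t.+1 * dO.-1).-1 < dO * dR)%N by rewrite prednK.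
  have k2 : \sum_n p n * g n <= \sum_(n < dO * dR | (dR <= n < dR + t.+1 * dO.-1)%N) p n.
    apply: (@knap _ p g c dR (t.+1 * dO.-1) (p (Ordinal hK'))).
    - by [].
    - by move=> n hn; apply: hp; rewrite /= -ltnS prednK.
    - by move=> n hn; apply: hp; rewrite /= (leq_trans (leq_pred _) hn).
    - by move=> n; apply: sumr_ge0 => m _; apply: sumr_ge0.
    - by move=> n; apply: sumr_ge0.
    - move=> n; rewrite -(hrow' n) big_split /= addrC.
      apply: lerD => //; apply: sum_le_full => m.
      by apply: sumr_ge0.
    - rewrite /g exchR.
      transitivity (\sum_(m < dR | (m < t.+1)%N) (1 : R) * dO.-1%:R).
        apply: eq_bigr => m _; rewrite exchR mul1r -(@count_neq dO i0).
        by apply: eq_bigr => i _; rewrite hcol.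
      by rewrite -mulr_suml count_ord // natrM.
    - rewrite /c exchR; transitivity (\sum_(m < dR) (1 : R)).
        by apply: eq_bigr => m _; rewrite hcol.
      by rewrite sumr_const card_ord.
    - rewrite -hpop exchR /c; apply: eq_bigr => n _; by rewrite mulr_sumr.
  by rewrite eY eY0; apply: lerD.
- rewrite sumrB; apply/eqP; rewrite subr_eq0; apply/eqP.
  transitivity (\sum_n p n).
    rewrite -/(\sum_m y m).
    under eq_bigr do rewrite hy.
    rewrite exchR; apply: eq_bigr => n _; by rewrite -mulr_sumr hrow' mulr1.
  rewrite /y0 exchR; apply: eq_bigr => n _; rewrite -mulr_sumr.
  rewrite (bigD1 (blk n)) //= eqxx big1 ?addr0 ?mulr1 // => m /negbTE.
  by rewrite eq_sym => ->.
Qed.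
End Cl.

Theorem theorem2 (R : realType) (dO dR : nat) (hO : (0 < dO)%N)
  (* H_R = sum_m lam_m |xi_m><xi_m|, lam nondecreasing, xi orthonormal basis *)
  (lam : 'I_dR -> R) (xi : 'I_dR -> 'cV[R[i]]_dR)
  (hlam : forall m m' : 'I_dR, (m <= m')%N -> lam m <= lam m')
  (hxi : onfam xi)
  (beta : R) (hbeta : 0 < beta)
  (* rho_O = sum_l o_l |phi_l><phi_l|, a density operator, o nonincreasing *)
  (o : 'I_dO -> R) (phi : 'I_dO -> 'cV[R[i]]_dO)
  (ho_ge0 : forall l, 0 <= o l) (ho_sum : \sum_(l < dO) o l = 1)
  (ho_dec : forall l l' : 'I_dO, (l <= l')%N -> o l' <= o l)
  (hphi : onfam phi)
  (* the non-increasing rearrangement of (o_l r_m)_{l,m} *)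
  (sigma : 'I_(dO * dR) -> 'I_dO * 'I_dR) (hsigma : bijective sigma)
  (hp_dec : forall n n' : 'I_(dO * dR), (n <= n')%N ->
     rear_weight o (gibbs_weight beta lam) sigma n'
       <= rear_weight o (gibbs_weight beta lam) sigma n)
  (* the unitary U_opt(0) *)
  (U0 : 'M[R[i]]_(dO * dR)) (hU0 : U0 \is unitarymx)
  (hi : forall (n : 'I_(dO * dR)) (m : 'I_dR), val n = val m ->
     U0 *m rear_ket phi xi sigma n = tensv (phi (Ordinal hO)) (xi m))
  (hii : forall m : 'I_dR, exists phim : 'I_dO.-1 -> 'cV[R[i]]_dO,
     [/\ onfam phim,
         (forall l, (phi (Ordinal hO)) ^t* *m phim l = 0) &
         (forall (n : 'I_(dO * dR)) (l : 'I_dO.-1),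
            val n = (dR + m * dO.-1 + l)%N ->
            U0 *m rear_ket phi xi sigma n = tensv (phim l) (xi m))]) :
  let HR := specop lam xi in
  let rhoR := specop (gibbs_weight beta lam) xi in
  let rhoO := specop o phi in
  let rho := kron rhoO rhoR in
  let phi1 := phi (Ordinal hO) in
  let pmax := \sum_(n < dO * dR | (n < dR)%N)
                 rear_weight o (gibbs_weight beta lam) sigma n in
  pop dO dR phi1 rho U0 = pmax%:C /\
  (forall V : 'M[R[i]]_(dO * dR), V \is unitarymx ->
     pop dO dR phi1 rho V = pmax%:C ->
     heat dO dR HR rhoR rho U0 <= heat dO dR HR rhoR rho V).
Proof.
move=> HR rhoR rhoO rho phi1 pmax.
set rr := gibbs_weight beta lam.
set p := rear_weight o rr sigma.
set psi := rear_ket phi xi sigma.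
set i0 := Ordinal hO.
have hsig : {on [pred q | true], bijective sigma} by apply: onW_bij.
have hpsiC : forall k l, \sum_n psi n k 0 * (psi n l 0)^* = (k == l)%:R.
  move=> k l; rewrite -(@complete_tens _ _ _ _ _ hphi hxi k l) [RHS](reindex sigma hsig).
  by [].
have hrho : rho = \sum_n (p n)%:C *: ketbra (psi n).
  apply/matrixP => k l.
  have [i [j hk]] := @mxvec_index_surj dO dR k; have [i' [j' hl]] := @mxvec_index_surj dO dR l; subst k l.
  transitivity (\sum_(q : 'I_dO * 'I_dR) ((o q.1 * rr q.2)%:C *
     (tensv (phi q.1) (xi q.2) (mxvec_index i j) 0 * (tensv (phi q.1) (xi q.2) (mxvec_index i' j') 0)^*))).
    rewrite sum_pairT /rho kronE /rhoO /rhoR !specopE mulr_suml; apply: eq_bigr => a _.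
    rewrite mulr_sumr; apply: eq_bigr => b _.
    rewrite !tensvE !rmorphM /=; ring.
  rewrite (reindex sigma hsig) summxE; apply: eq_bigr => n _.
  by rewrite !mxE big_ord1 !mxE.
pose a := fun (V : 'M[R[i]]_(dO * dR)) n i m =>
  sqn (((tensv (phi i) (xi m)) ^t* *m (V *m psi n)) 0 0).
have hpop : forall V, pop dO dR phi1 rho V = (\sum_m \sum_n p n * a V n i0 m)%:C.
  move=> V; rewrite /pop (@expect_ptrR _ _ _ _ _ hxi) hrho conj_spec rmorph_sum.
  apply: eq_bigr => m _; rewrite expect_sum rmorph_sum; apply: eq_bigr => n _.
  by rewrite expect_ketbra [RHS]rmorphM.
have hheat : forall V, heat dO dR HR rhoR rho V =
    (\sum_m lam m * \sum_i \sum_n p n * a V n i m)%:C - \tr (HR *m rhoR).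
  move=> V; rewrite /heat mulmxBr linearB /=; congr (_ - _).
  rewrite tr_specop rmorph_sum; apply: eq_bigr => m _.
  rewrite rmorphM; congr (_ * _).
  rewrite (@expect_ptrO _ _ _ _ _ hphi) rmorph_sum; apply: eq_bigr => i _.
  rewrite hrho conj_spec expect_sum rmorph_sum; apply: eq_bigr => n _.
  by rewrite expect_ketbra [RHS]rmorphM.
have hrow : forall V, V \is unitarymx -> forall n, \sum_i \sum_m a V n i m = 1.
  move=> V hV n; apply: complexI.
  have h := @parseval _ _ _ (fun q : 'I_dO * 'I_dR => tensv (phi q.1) (xi q.2))
     (@complete_tens _ _ _ _ _ hphi hxi) (V *m psi n).
  rewrite sum_pairT /= in h.
  rewrite rmorph_sum; under eq_bigr do rewrite rmorph_sum.
  rewrite h trmx_mul map_mxM !mulmxA -(mulmxA _ _ V) (mulmx1C (unitarymxP hV)) mulmx1.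
  by rewrite /psi /rear_ket ip_tens (@onfamE _ _ _ _ hphi) (@onfamE _ _ _ _ hxi) !eqxx mulr1.
have hcol : forall V, V \is unitarymx -> forall i m, \sum_n a V n i m = 1.
  move=> V hV i m; apply: complexI.
  set e := tensv (phi i) (xi m).
  have h := @parseval _ _ _ psi hpsiC (V ^t* *m e).
  rewrite rmorph_sum.
  transitivity (\sum_n (sqn ((psi n ^t* *m (V ^t* *m e)) 0 0))%:C).
    apply: eq_bigr => n _; rewrite /a -/e (mulmxA (e ^t*)).
    have -> : e ^t* *m V = (V ^t* *m e) ^t* by rewrite trmx_mul map_mxM trmxCK.
    by rewrite ip_conj sqnJ.
  rewrite h trmx_mul map_mxM trmxCK !mulmxA -(mulmxA _ V) (unitarymxP hV) mulmx1.
  by rewrite /e ip_tens (@onfamE _ _ _ _ hphi) (@onfamE _ _ _ _ hxi) !eqxx mulr1.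
pose bv := fun n : 'I_(dO * dR) => if (n < dR)%N then val n else ((n - dR) %/ dO.-1)%N.
have hbv : forall n, (bv n < dR)%N.
  move=> n; rewrite /bv; case: (ltnP n dR) => h //.
  have := @blk_aux dO.-1 dR n; rewrite prednK // => /(_ (ltn_ord n) h) [].
  by [].
pose blk := fun n => Ordinal (hbv n).
have hblk : forall (n : 'I_(dO * dR)) t, (t <= dR)%N ->
    (blk n < t)%N = (n < t)%N || (dR <= n < dR + t * dO.-1)%N.
  move=> n t ht; rewrite /= /bv; case: (ltnP n dR) => h.
    by rewrite /= orbF.
  have := @blk_aux dO.-1 dR n; rewrite prednK // => /(_ (ltn_ord n) h) [hd _].
  rewrite blk_div //=.
  have -> : (n < t)%N = false by apply/negbTE; rewrite -leqNgt (leq_trans ht h).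
  by [].
have hU : forall n, exists u : 'cV[R[i]]_dO, [/\ U0 *m psi n = tensv u (xi (blk n)),
    (u ^t* *m u) 0 0 = 1 & (phi1 ^t* *m u) 0 0 = ((n < dR)%N)%:R].
  move=> n; case: (ltnP n dR) => h.
    exists phi1; split.
    - have -> : blk n = Ordinal h by apply: val_inj; rewrite /= /bv h.
      by apply: hi.
    - by rewrite (@onfamE _ _ _ _ hphi) eqxx.
    - by rewrite (@onfamE _ _ _ _ hphi) eqxx.
  have := @blk_aux dO.-1 dR n; rewrite prednK // => /(_ (ltn_ord n) h) [hd hq].
  have hl : ((n - dR) %% dO.-1 < dO.-1)%N by rewrite ltn_pmod.
  have [phim [hon hor hUm]] := hii (blk n).
  exists (phim (Ordinal hl)); split.
  - apply: hUm => /=; rewrite /bv ltnNge h /=.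
    have := divn_eq (n - dR) dO.-1; lia.
  - by rewrite (@onfamE _ _ _ _ hon) eqxx.
  - by rewrite (hor (Ordinal hl)) mxE.
have hsq01 : forall b : bool, sqn (b%:R : R[i]) = b%:R.
  by case; rewrite ?sqn1 ?sqn0.
have hA : forall n : 'I_(dO * dR), exists u : 'cV[R[i]]_dO, [/\ forall i m, a U0 n i m = sqn ((phi i ^t* *m u) 0 0) * (blk n == m)%:R,
    \sum_i sqn ((phi i ^t* *m u) 0 0) = 1 & sqn ((phi1 ^t* *m u) 0 0) = ((n < dR)%N)%:R].
  move=> n; have [u [hu1 hu2 hu3]] := hU n; exists u; split.
  - move=> i m; rewrite /a hu1 ip_tens sqnM (@onfamE _ _ _ _ hxi) hsq01.
    by rewrite eq_sym.
  - apply: complexI; rewrite rmorph_sum.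
    by rewrite (@parseval _ _ _ phi (@complete _ _ _ hphi)) hu2.
  - by rewrite hu3 hsq01.
have hsumb : forall n : 'I_(dO * dR), \sum_m ((blk n == m)%:R : R) = 1.
  move=> n; rewrite (bigD1 (blk n)) //= eqxx big1 ?addr0 // => m /negbTE.
  by rewrite eq_sym => ->.
have hA1 : forall (n : 'I_(dO * dR)) (m : 'I_dR), \sum_i a U0 n i m = (blk n == m)%:R.
  move=> n m; have [u [h1 h2 h3]] := hA n.
  under eq_bigr do rewrite h1.
  by rewrite -mulr_suml h2 mul1r.
have hA2 : forall (n : 'I_(dO * dR)) (m : 'I_dR), a U0 n i0 m = ((n < dR)%N)%:R * (blk n == m)%:R.
  move=> n m; have [u [h1 h2 h3]] := hA n.
  by rewrite h1 h3.
split.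
  rewrite hpop; congr (_%:C); rewrite /pmax exchR sum_if; apply: eq_bigr => n _.
  rewrite -mulr_sumr; under eq_bigr do rewrite hA2.
  rewrite -mulr_sumr hsumb mulr1.
  by case: (n < dR)%N; rewrite ?mulr1 ?mulr0.
move=> V hV hpV; rewrite !hheat lerD2r lecR.
have hpV' : \sum_m \sum_n p n * a V n i0 m = \sum_(n < dO * dR | (n < dR)%N) p n.
  by apply: complexI; rewrite -hpop hpV.
have key := @master _ dO dR i0 lam hlam p hp_dec (a V) (fun n i m => sqn_ge0 _ _)
   (hrow V hV) (hcol V hV) hpV' blk hblk.
apply: le_trans key; rewrite le_eqVlt; apply/orP; left; apply/eqP; apply: eq_bigr => m _; congr (_ * _).
rewrite exchR; apply: eq_bigr => n _; by rewrite -mulr_sumr hA1.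
Qed.
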